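(* In every execution of the Minimmit protocol (described in the context), if a block $b$ receives an L-notarization, then no block $b'\neq b$ with $b'.\text{view}=b.\text{view}$ receives an M-notarization.
   Context: Setting. There are $n$ processors $\Pi=\{p_0,\dots,p_{n-1}\}$ and an integer $f$ with $5f+1\le n$. At most $f$ processors may be corrupted by an adversary during the execution and then behave arbitrarily (Byzantine); processors never corrupted are called correct. Processors communicate over point-to-point authenticated channels; every message is signed by its sender; a PKI validates signatures and $H$ is a collision-resistant hash function; attention is restricted to executions in which the adversary cannot forge signatures or find hash collisions. Time is divided into timeslots $t\in\mathbb{N}_{\ge 0}$ (partial synchrony): a message sent at time $t$ arrives at some time $t'>t$ with $t'\le \max\{\text{GST},t\}+\Delta$, where $\Delta$ is known to the protocol and GST is unknown and chosen by the adversary (who also chooses delivery times subject to this constraint). Clocks of correct processors advance in real time. When a correct processor sends a message to all processors, it regards that message as immediately received by itself. Transactions are unique messages signed by the environment; each timeslot each processor may receive a finite set of transactions. Each processor $p_i$ maintains an append-only log $\text{log}_i$ of distinct transactions, $\text{log}_i(t)$ denoting its value at the end of timeslot $t$. Blocks. $\text{lead}(v):=p_j$ with $j=v \bmod n$. The genesis block is $b_{\text{gen}}=(0,\lambda,\lambda)$ ($\lambda$ the empty sequence). Any other block is a tuple $b=(v,\text{Tr},h)$ signed by $\text{lead}(v)$, with $v\in\mathbb{N}_{\ge1}$ ($b.\text{view}=v$, ''a view $v$ block''), $\text{Tr}=b.\text{Tr}$ a sequence of distinct transactions, and $h=b.h$ a hash value; its parent is the block $b'$ with $H(b')=h$. The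 ancestors of $b$ are $b$ and the ancestors of its parent ($b_{\text{gen}}$ has only itself). Two blocks are inconsistent if neither is an ancestor of the other. To finalise $b$ means: upon obtaining all ancestors of $b$, the processor sets its log to extend the concatenation of $b'.\text{Tr}$ over ancestors $b'$ of $b$ (with duplicates removed). Messages. A vote for $b$ is $(\text{vote},b)$. An M-notarization for $b$ is a set of $2f+1$ votes for $b$ signed by distinct processors; an L-notarization for $b$ is a set of $n-f$ votes for $b$ signed by distinct processors. A nullify$(v)$ message is $(\text{nullify},v)$; a nullification for view $v$ is a set of $2f+1$ nullify$(v)$ messages signed by distinct processors. In the claim, a block $b$ ''receives an M-notarization'' if $b=b_{\text{gen}}$ or at least $2f+1$ processors send votes for $b$; $b$ ''receives an L-notarization'' if $b=b_{\text{gen}}$ or at least $n-f$ processors send votes for $b$; view $v$ ''receives a nullification'' if at least $2f+1$ processors send nullify$(v)$ messages. Local state of each processor: $\mathtt{S}$, the set of all received messages (automatically updated; it contains a block $b$ if it contains any message having $b$ as an entry; initially it contains only $b_{\text{gen}}$ and an M- and L-notarization for $b_{\text{gen}}$); the current view $\mathtt{v}$ (initially 1; a processor enters view $v$ when $\mathtt{v}$ becomes $v$); a timer $\mathtt{T}$ (initially 0, increasing in real time, reset to 0 upon entering a new view); $\mathtt{nullified}$ (initially false) and $\mathtt{notarized}$ (initially $\bot$, a value different from every block). SelectParent$(\mathtt{S},\mathtt{v})$: let $v'<\mathtt{v}$ be greatest such that $\mathtt{S}$ contains an M-notarization for some block of view $v'$; output the lexicographically least such block. ProposeChild$(b,v)$: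 form a sequence Tr of distinct transactions containing all transactions received and not in $b'.\text{Tr}$ for any ancestor $b'\in\mathtt{S}$ of $b$, and send the block $(v,\text{Tr},H(b))$ to all processors. $\mathtt{S}$ contains a valid proposal $b$ for view $v$ if $\mathtt{S}$ contains (i) precisely one block of the form $b=(v,\text{Tr},h)$ signed by $\text{lead}(v)$, (ii) an M-notarization for some $b'$ with $H(b')=h$, say $b'.\text{view}=v'$, and (iii) a nullification for each view in the open interval $(v',v)$. At timeslot $t$ a nullification $N\subseteq\mathtt{S}$ for a view $v$ is new if $\mathtt{S}$ contained no nullification for $v$ at any earlier timeslot and $N$ is lexicographically least among nullifications for $v$ in $\mathtt{S}$; new M-notarizations and new L-notarizations for a block $b$ are defined analogously. Protocol (Minimmit): at every timeslot, correct $p_i$ does, in order: (1) send new nullifications in $\mathtt{S}$ to all processors; (2) send new M- and L-notarizations in $\mathtt{S}$ to all; (3) if $p_i=\text{lead}(\mathtt{v})$, execute ProposeChild(SelectParent$(\mathtt{S},\mathtt{v}),\mathtt{v})$; (4) if $\mathtt{S}$ contains a valid proposal $b$ for view $\mathtt{v}$ and $\mathtt{notarized}=\bot$ and $\mathtt{nullified}=$ false, set $\mathtt{notarized}:=b$ and send $(\text{vote},b)$ to all; (5) if $\mathtt{T}=2\Delta$, $\mathtt{nullified}=$ false and $\mathtt{notarized}=\bot$, set $\mathtt{nullified}:=$ true and send $(\text{nullify},\mathtt{v})$ to all; (6) if $\mathtt{S}$ contains a nullification for $\mathtt{v}$, set $\mathtt{v}:=\mathtt{v}+1$, $\mathtt{nullified}:=$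 false, $\mathtt{notarized}:=\bot$; (7) if $\mathtt{S}$ contains an M-notarization for some $b$ with $b.\text{view}=\mathtt{v}$: if $\mathtt{notarized}=\bot$ and $\mathtt{nullified}=$ false send $(\text{vote},b)$ to all; then set $\mathtt{v}:=\mathtt{v}+1$, $\mathtt{nullified}:=$ false, $\mathtt{notarized}:=\bot$; (8) if $\mathtt{nullified}=$ false, $\mathtt{notarized}\neq\bot$, and $\mathtt{S}$ contains at least $2f+1$ messages signed by distinct processors, each either $(\text{nullify},\mathtt{v})$ or $(\text{vote},b)$ for some $b$ with $b.\text{view}=\mathtt{v}$ and $b\ne\mathtt{notarized}$, then set $\mathtt{nullified}:=$ true and send $(\text{nullify},\mathtt{v})$ to all; (9) if $\mathtt{S}$ contains a new L-notarization for a block $b$, finalise $b$. *)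

(* Defs.v *)
From mathcomp Require Import all_boot.

Set Implicit Arguments.
Unset Strict Implicit.
Unset Printing Implicit Defensive.

Section Minimmit.

(* n processors p_0..p_{n-1} ('I_n), fault bound f, delay bound Delta,
   transactions Tx, hash values Hash with the empty sequence hnil (lambda). *)
Variables (n f Delta : nat) (Tx Hash : eqType) (hnil : Hash).

Definition block := (nat * seq Tx * Hash)%type.
Definition bview (b : block) : nat := b.1.1.
Definition bTr (b : block) : seq Tx := b.1.2.
Definition bh (b : block) : Hash := b.2.
Definition genesis : block := (0, [::], hnil).

Variable H : block -> Hash.

Definition is_lead (p : 'I_n) (v : nat) : bool := (p : nat) == v %% n.

Inductive anc : block -> block -> Prop :=
| anc_self b : anc b b
| anc_parent b c a : b != genesis -> H c = bh b -> anc c a -> anc b a.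

Definition payload := (block + block + nat)%type.
Definition PBlock (b : block) : payload := inl (inl b).
Definition PVote (b : block) : payload := inl (inr b).
Definition PNull (v : nat) : payload := inr v.

(* a signed message: (signer, content) *)
Definition atom := ('I_n * payload)%type.
(* what is transmitted over a channel: a single signed message, or an
   aggregate (a nullification / M- / L-notarization = set of signed messages) *)
Definition msg := seq atom.

Definition payload_blocks (x : payload) : seq block :=
  match x with inl (inl b) => [:: b] | inl (inr b) => [:: b] | inr _ => [::] end.
Definition atom_blocks (a : atom) : seq block := payload_blocks a.2.

(* blocks contained in S (S always contains b_gen) *)
Definition blocks_of (S : seq atom) : seq block :=
  genesis :: flatten (map atom_blocks S).

Definition voters (S : seq atom) (b : block) : {set 'I_n} :=
  [set q | (q, PVote b) \in S].
Definition nullifiers (S : seq atom) (v : nat) : {set 'I_n} :=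
  [set q | (q, PNull v) \in S].

Definition hasM (S : seq atom) (b : block) : bool :=
  (b == genesis) || (2 * f + 1 <= #|voters S b|).
Definition hasL (S : seq atom) (b : block) : bool :=
  (b == genesis) || (n - f <= #|voters S b|).
Definition hasNull (S : seq atom) (v : nat) : bool :=
  2 * f + 1 <= #|nullifiers S v|.

Definition is_nullification (v : nat) (m : msg) : bool :=
  [&& size m == 2 * f + 1, uniq (map fst m) & all (fun a => a.2 == PNull v) m].
Definition is_vote_set (k : nat) (b : block) (m : msg) : bool :=
  [&& size m == k, uniq (map fst m) & all (fun a => a.2 == PVote b) m].

(* local state: S, v, time at which the current view was entered (so the
   timer is T = t - entry at timeslot t), nullified, notarized (None = bot) *)
Record lstate := LS {
  lS : seq atom;
  lv : nat;
  lentry : nat;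
  lnullified : bool;
  lnotarized : option block }.

Definition init_state : lstate := LS [::] 1 0 false None.

(* configuration within a timeslot: local state and messages sent so far *)
Definition config := (lstate * seq msg)%type.

(* sending m to all processors: recorded in the outbox and, being regarded as
   immediately received by the sender, added to S *)
Definition send (m : msg) (c : config) : config :=
  let: (s, ob) := c in
  (LS (lS s ++ m) (lv s) (lentry s) (lnullified s) (lnotarized s), rcons ob m).
Definition sends (ms : seq msg) (c : config) : config :=
  foldl (fun c m => send m c) c ms.

Definition set_notarized (b : block) (c : config) : config :=
  let: (s, ob) := c in
  (LS (lS s) (lv s) (lentry s) (lnullified s) (Some b), ob).
Definition set_nullified (c : config) : config :=
  let: (s, ob) := c in
  (LS (lS s) (lv s) (lentry s) true (lnotarized s), ob).
Definition advance (t : nat) (c : config) : config :=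
  let: (s, ob) := c in
  (LS (lS s) (lv s).+1 t false None, ob).

Definition select_parent (S : seq atom) (v : nat) (b : block) : Prop :=
  [/\ hasM S b, bview b < v &
      forall b2, hasM S b2 -> bview b2 < v -> bview b2 <= bview b].

(* Tr is a legal transaction sequence for ProposeChild(b, v), where txs are
   all transactions received so far *)
Definition propose_tr (S : seq atom) (txs : seq Tx) (b : block) (Tr : seq Tx) : Prop :=
  uniq Tr /\
  forall x, x \in txs ->
    (forall a, anc b a -> a \in blocks_of S -> x \notin bTr a) -> x \in Tr.

Definition valid_proposal (S : seq atom) (v : nat) (b : block) : Prop :=
  [/\ bview b = v, b \in blocks_of S,
      (forall b2, b2 \in blocks_of S -> bview b2 = v -> b2 = b) &
      exists b', [/\ hasM S b', H b' = bh b &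
                     forall w, bview b' < w < v -> hasNull S w]].

Definition conflicting (v : nat) (nb : option block) (x : payload) : bool :=
  match x with
  | inr w => w == v
  | inl (inr b) => (bview b == v) && (Some b != nb)
  | inl (inl _) => false
  end.
Definition conflict_set (S : seq atom) (v : nat) (nb : option block) : {set 'I_n} :=
  [set q | has (fun a : atom => (a.1 == q) && conflicting v nb a.2) S].

(* ---------- the nine steps (step 9 only affects the log, not modelled) ---------- *)

(* (1) send new nullifications; Sprev = S at the end of the previous timeslot *)
Definition step1 (Sprev : seq atom) (c c' : config) : Prop :=
  exists (vs : seq nat) (N : nat -> msg),
    [/\ uniq vs,
        (forall v, v \in vs = hasNull (lS c.1) v && ~~ hasNull Sprev v),
        (forall v, v \in vs -> is_nullification v (N v) /\ {subset N v <= lS c.1}) &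
        c' = sends (map N vs) c].

Definition step2 (Sprev : seq atom) (c c' : config) : Prop :=
  exists (bsM bsL : seq block) (NM NL : block -> msg),
    [/\ uniq bsM /\ uniq bsL,
        (forall b, b \in bsM =
           [&& b != genesis, hasM (lS c.1) b & ~~ hasM Sprev b]),
        (forall b, b \in bsL =
           [&& b != genesis, hasL (lS c.1) b & ~~ hasL Sprev b]),
        (forall b, b \in bsM ->
           is_vote_set (2 * f + 1) b (NM b) /\ {subset NM b <= lS c.1}) /\
        (forall b, b \in bsL ->
           is_vote_set (n - f) b (NL b) /\ {subset NL b <= lS c.1}) &
        c' = sends (map NM bsM ++ map NL bsL) c].

Definition step3 (p : 'I_n) (txs : seq Tx) (c c' : config) : Prop :=
  let s := c.1 in
  if is_lead p (lv s) then
    exists b Tr, [/\ select_parent (lS s) (lv s) b,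
                     propose_tr (lS s) txs b Tr &
                     c' = send [:: (p, PBlock (lv s, Tr, H b))] c]
  else c' = c.

Definition step4 (p : 'I_n) (c c' : config) : Prop :=
  let s := c.1 in
  (exists b, [/\ valid_proposal (lS s) (lv s) b, lnotarized s = None,
                 lnullified s = false &
                 c' = send [:: (p, PVote b)] (set_notarized b c)])
  \/
  ((forall b, ~ valid_proposal (lS s) (lv s) b) \/ lnotarized s <> None
     \/ lnullified s = true) /\ c' = c.

Definition step5 (p : 'I_n) (t : nat) (c c' : config) : Prop :=
  let s := c.1 in
  if [&& t - lentry s == 2 * Delta, ~~ lnullified s & lnotarized s == None]
  then c' = send [:: (p, PNull (lv s))] (set_nullified c)
  else c' = c.

Definition step6 (t : nat) (c c' : config) : Prop :=
  let s := c.1 in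
  if hasNull (lS s) (lv s) then c' = advance t c else c' = c.

Definition step7 (p : 'I_n) (t : nat) (c c' : config) : Prop :=
  let s := c.1 in
  (exists b, [/\ hasM (lS s) b, bview b = lv s &
     c' = advance t (if (lnotarized s == None) && ~~ lnullified s
                     then send [:: (p, PVote b)] c else c)])
  \/
  ((forall b, ~ (hasM (lS s) b /\ bview b = lv s)) /\ c' = c).

Definition step8 (p : 'I_n) (c c' : config) : Prop :=
  let s := c.1 in
  if [&& ~~ lnullified s, lnotarized s != None &
         2 * f + 1 <= #|conflict_set (lS s) (lv s) (lnotarized s)|]
  then c' = send [:: (p, PNull (lv s))] (set_nullified c)
  else c' = c.

Definition timeslot (p : 'I_n) (t : nat) (Sprev : seq atom) (txs : seq Tx)
    (c0 c8 : config) : Prop :=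
  exists c1 c2 c3 c4 c5 c6 c7,
    [/\ step1 Sprev c0 c1, step2 Sprev c1 c2, step3 p txs c2 c3 & step4 p c3 c4]
    /\ [/\ step5 p t c4 c5, step6 t c5 c6, step7 p t c6 c7 & step8 p c7 c8].

Record execution := Exec {
  correct : 'I_n -> bool;                     (* never corrupted *)
  GST : nat;
  rx : 'I_n -> nat -> seq Tx;                 (* transactions received at a timeslot *)
  out : 'I_n -> 'I_n -> nat -> seq msg;       (* messages sent by p to q at timeslot t *)
  arr : 'I_n -> 'I_n -> nat -> msg -> nat;    (* arrival time chosen by the adversary *)
  st : 'I_n -> nat -> lstate                  (* local state at the end of timeslot t *)
}.

Variable E : execution.

Definition inbox (p : 'I_n) (t : nat) : seq atom :=
  flatten [seq flatten [seq flatten [seq m | m <- out E q p t0 & arr E q p t0 m <= t]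
                       | t0 <- iota 0 t]
          | q <- enum 'I_n & q != p].

Definition rx_upto (p : 'I_n) (t : nat) : seq Tx :=
  flatten [seq rx E p t0 | t0 <- iota 0 t.+1].

Definition prev_state (p : 'I_n) (t : nat) : lstate :=
  if t is t'.+1 then st E p t' else init_state.

Definition start_state (p : 'I_n) (t : nat) : lstate :=
  let s := prev_state p t in
  LS (lS s ++ inbox p t) (lv s) (lentry s) (lnullified s) (lnotarized s).

Definition appears (b : block) : Prop :=
  b = genesis \/
  exists p q t m a, [/\ m \in out E p q t, a \in m & b \in atom_blocks a].

Definition minimmit_execution : Prop :=
  [/\
      #|[set p | ~~ correct E p]| <= f,
      (forall p t, correct E p ->
         exists ob, timeslot p t (lS (prev_state p t)) (rx_upto p t)
                             (start_state p t, [::]) (st E p t, ob)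
                    /\ forall q, out E p q t = ob),
      (forall p q t m, p != q -> m \in out E p q t ->
         t < arr E p q t m <= maxn (GST E) t + Delta),
      (* signatures of correct processors cannot be forged *)
      (forall p q t m a, m \in out E p q t -> a \in m -> correct E a.1 ->
         exists q' t' m', [/\ t' <= t, m' \in out E a.1 q' t' & a \in m']) &
      (* every non-genesis block is signed by lead(view); unforgeable *)
      (forall p q t m a b (l : 'I_n), m \in out E p q t -> a \in m ->
         b \in atom_blocks a -> b != genesis -> is_lead l (bview b) ->
         correct E l ->
         exists q' t' m', [/\ t' <= t, m' \in out E l q' t' & (l, PBlock b) \in m']) /\
      (forall b, appears b -> b = genesis \/ (0 < bview b /\ uniq (bTr b))) /\
      (forall b1 b2, appears b1 -> appears b2 -> H b1 = H b2 -> b1 = b2)].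

Definition sends_vote (q : 'I_n) (b : block) : Prop :=
  exists r t m, m \in out E q r t /\ (q, PVote b) \in m.

Definition receives_M (b : block) : Prop :=
  b = genesis \/
  exists A : {set 'I_n}, 2 * f + 1 <= #|A| /\ forall q, q \in A -> sends_vote q b.

Definition receives_L (b : block) : Prop :=
  b = genesis \/
  exists A : {set 'I_n}, n - f <= #|A| /\ forall q, q \in A -> sends_vote q b.

End Minimmit.

(* Main.v *)
Require Import Defs.
From mathcomp Require Import all_boot.
From mathcomp Require Import zify.

Set Implicit Arguments.
Unset Strict Implicit.
Unset Printing Implicit Defensive.

Section Proof.
Variables (n f Delta : nat) (Tx Hash : eqType) (hnil : Hash).
Variable H : block Tx Hash -> Hash.
Variable E : execution n Tx Hash.

Section Proc.
Variable p : 'I_n.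

Definition inv (s : lstate n Tx Hash) : Prop :=
  [/\ 0 < lv s,
   forall b, (p, PVote b) \in lS s -> 0 < bview b /\
       (bview b < lv s \/ (bview b = lv s /\ lnotarized s = Some b)) &
   forall b1 b2, (p, PVote b1) \in lS s -> (p, PVote b2) \in lS s ->
       bview b1 = bview b2 -> b1 = b2].

Definition J (c : config n Tx Hash) : Prop :=
  inv c.1 /\ forall m, m \in c.2 -> {subset m <= lS c.1}.

Definition pres (c c' : config n Tx Hash) : Prop :=
  J c -> J c' /\ {subset lS c.1 <= lS c'.1}.

Lemma pres_refl c : pres c c.
Proof. by move=> hJ; split. Qed.

Lemma pres_trans c1 c2 c3 : pres c1 c2 -> pres c2 c3 -> pres c1 c3.
Proof.
move=> h12 h23 hJ; have [hJ2 s12] := h12 hJ; have [hJ3 s23] := h23 hJ2.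
by split => // x /s12 /s23.
Qed.

Lemma inv_cat s m : inv s ->
  (forall b, (p, PVote b) \in m -> (p, PVote b) \in lS s) ->
  inv (LS (lS s ++ m) (lv s) (lentry s) (lnullified s) (lnotarized s)).
Proof.
case=> h0 h1 h2 hm; split => //=.
- by move=> b; rewrite mem_cat => /orP[|/hm]; apply: h1.
- move=> b1 b2; rewrite !mem_cat => /orP[|/hm] hb1 /orP[|/hm] hb2; exact: h2.
Qed.

Lemma pres_send m c :
  (forall b, (p, PVote b) \in m -> (p, PVote b) \in lS c.1) -> pres c (send m c).
Proof.
case: c => s ob /= hm [hI hob]; split; last by move=> x /= hx; rewrite mem_cat hx.
split; first exact: inv_cat.
move=> m0 /=; rewrite mem_rcons inE => /orP[/eqP->|/hob hs] x hx;
  rewrite mem_cat; apply/orP; [right|left] => //; exact: hs.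
Qed.

Lemma pres_sends (ms : seq (msg n Tx Hash)) c :
  (forall m, m \in ms -> {subset m <= lS c.1}) -> pres c (sends ms c).
Proof.
elim: ms c => [|m ms IH] c hms /=; first exact: pres_refl.
apply: (@pres_trans _ (send m c)).
  by apply: pres_send => b; apply: (hms m); rewrite inE eqxx.
apply: IH => m0 hm0 x hx; case: c hms => s ob /= hms.
by rewrite mem_cat (hms m0) // inE hm0 orbT.
Qed.

Lemma pres_nonvote (x : atom n Tx Hash) c : (forall b, x != (p, PVote b)) -> pres c (send [:: x] c).
Proof.
move=> hx; apply: pres_send => b; rewrite inE eq_sym => hb.
by move: (hx b); rewrite hb.
Qed.

Lemma pres_null (v : nat) c : pres c (send [:: (p, PNull Tx Hash v)] (set_nullified c)).
Proof.
apply: (@pres_trans _ (set_nullified c)).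
  by case: c => s ob; apply: pres_refl.
by apply: pres_nonvote => b; apply/eqP => -[].
Qed.

Lemma pres_advance t c : pres c (advance t c).
Proof.
case: c => [[S v e nl nt] ob] [[h0 h1 h2] hob]; split => //=; split => //=.
split => // b /h1 [? [hb|[hb _]]]; split=> //; left; simpl in *; lia.
Qed.

Lemma pres_vote (b : block Tx Hash) c : lnotarized c.1 = None -> bview b = lv c.1 ->
  pres c (send [:: (p, PVote b)] (set_notarized b c)).
Proof.
case: c => [[S v e nl nt] ob] /= hnt hbv [[h0 h1 h2] hob]; subst nt.
split; last by move=> x /= hx; rewrite mem_cat hx.
split; last first.
  move=> m0 /=; rewrite mem_rcons inE => /orP[/eqP->|/hob hs] x hx;
    rewrite mem_cat; apply/orP; [right|left] => //; exact: hs.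
have old : forall b0, (p, PVote b0) \in S -> 0 < bview b0 /\ bview b0 < v.
  by move=> b0 /h1 [? [?|[_ ?]]].
split => //= .
- move=> b0; rewrite mem_cat => /orP[/old [? ?]|]; first by split => //; left.
  rewrite inE => /eqP [->]; split; [by rewrite hbv|by right; split].
- move=> b1 b2; rewrite !mem_cat !inE => /orP[hb1|/eqP[->]] /orP[hb2|/eqP[->]] hv //.
  + exact: h2.
  + have [_] := old _ hb1; simpl in *; lia.
  + have [_] := old _ hb2; simpl in *; lia.
Qed.

Lemma pres_vote_adv (b : block Tx Hash) t c : lnotarized c.1 = None -> bview b = lv c.1 ->
  pres c (advance t (send [:: (p, PVote b)] c)).
Proof.
move=> h1 h2; have -> : advance t (send [:: (p, PVote b)] c) =
   advance t (send [:: (p, PVote b)] (set_notarized b c)) by clear h1 h2; case: c.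
apply: pres_trans; [exact: (pres_vote h1 h2)|exact: pres_advance].
Qed.

Lemma pres_step1 Sprev c c' : step1 f Sprev c c' -> pres c c'.
Proof.
case=> vs [N [_ _ hN ->]]; apply: pres_sends => m /mapP [v hv ->].
by have [] := hN v hv.
Qed.

Lemma pres_step2 Sprev c c' : step2 f hnil Sprev c c' -> pres c c'.
Proof.
case=> bsM [bsL [NM [NL [_ _ _ [hM hL] ->]]]]; apply: pres_sends => m.
rewrite mem_cat => /orP[] /mapP [b hb ->]; [by have [] := hM b hb|by have [] := hL b hb].
Qed.

Lemma pres_step3 txs c c' : step3 f hnil H p txs c c' -> pres c c'.
Proof.
rewrite /step3; case: ifP => _; last by move->; apply: pres_refl.
by case=> b [Tr [_ _ ->]]; apply: pres_nonvote => b0; apply/eqP => -[].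
Qed.

Lemma pres_step4 c c' : step4 f hnil H p c c' -> pres c c'.
Proof.
case=> [[b [[hv _ _ _] hnt _ ->]]|[_ ->]]; last exact: pres_refl.
exact: pres_vote.
Qed.

Lemma pres_step5 t c c' : step5 Delta p t c c' -> pres c c'.
Proof. by rewrite /step5; case: ifP => _ ->; [apply: pres_null|apply: pres_refl]. Qed.

Lemma pres_step6 t c c' : step6 f t c c' -> pres c c'.
Proof. by rewrite /step6; case: ifP => _ ->; [apply: pres_advance|apply: pres_refl]. Qed.

Lemma pres_step7 t c c' : step7 f hnil p t c c' -> pres c c'.
Proof.
case=> [[b [_ hv ->]]|[_ ->]]; last exact: pres_refl.
case: ifP => [/andP[/eqP hnt _]|_]; [exact: pres_vote_adv|exact: pres_advance].
Qed.

Lemma pres_step8 c c' : step8 f p c c' -> pres c c'.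
Proof. by rewrite /step8; case: ifP => _ ->; [apply: pres_null|apply: pres_refl]. Qed.

Lemma pres_timeslot t Sprev txs c c' :
  timeslot f Delta hnil H p t Sprev txs c c' -> pres c c'.
Proof.
case=> c1 [c2 [c3 [c4 [c5 [c6 [c7 [[h1 h2 h3 h4] [h5 h6 h7 h8]]]]]]]].
apply: (pres_trans (pres_step1 h1)); apply: (pres_trans (pres_step2 h2)).
apply: (pres_trans (pres_step3 h3)); apply: (pres_trans (pres_step4 h4)).
apply: (pres_trans (pres_step5 h5)); apply: (pres_trans (pres_step6 h6)).
apply: (pres_trans (pres_step7 h7)); exact: pres_step8 h8.
Qed.

End Proc.
Lemma inboxP (p : 'I_n) t x : x \in inbox E p t ->
  exists q t0 m, [/\ t0 < t, m \in out E q p t0 & x \in m].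
Proof.
move=> /flattenP [s1 /mapP [q _ ->]] /flattenP [s2 /mapP [t0 ht0 ->]].
move=> /flattenP [m /mapP [m' hm' ->]] hx.
move: ht0; rewrite mem_iota add0n => /andP[_ ht0].
move: hm'; rewrite mem_filter => /andP[_ hm'].
by exists q, t0, m'.
Qed.

Hypothesis hex : minimmit_execution f Delta hnil H E.

Lemma Q_all (p : 'I_n) : correct E p -> forall t,
  [/\ inv p (st E p t),
      (forall r m, m \in out E p r t -> {subset m <= lS (st E p t)}) &
      {subset lS (prev_state E p t) <= lS (st E p t)}].
Proof.
move=> hp; case: hex => _ h2 _ h4 _.
elim/ltn_ind => t IH.
have mono : forall t1 t2, t1 <= t2 -> t2 < t -> {subset lS (st E p t1) <= lS (st E p t2)}.
  move=> t1; elim=> [|t2 IHt] h12 h2t.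
    by move: h12; rewrite leqn0 => /eqP ->.
  move: h12; rewrite leq_eqVlt => /orP[/eqP -> //|h12] x hx.
  have [_ _ h3] := IH t2.+1 h2t; apply: h3 => /=.
  by apply: IHt => //; apply: ltnW.
have hprev : inv p (prev_state E p t).
  case: t IH {mono} => [|t] IH /=; first by split => //.
  by have [] := IH t (ltnSn t).
have hin : forall b, (p, PVote b) \in inbox E p t -> (p, PVote b) \in lS (prev_state E p t).
  move=> b /inboxP [q [t0 [m [ht0 hm hx]]]].
  have [q' [t' [m' [ht' hm' hx']]]] := h4 q p t0 m _ hm hx hp.
  have [_ hout _] := IH t' (leq_ltn_trans ht' ht0).
  have := hout _ _ hm' _ hx'.
  case: t IH mono ht0 {hprev} => [|t] IH mono ht0 //= hst.
  by apply: (mono t') => //; apply: leq_trans ht' _.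
have [ob [hts hout]] := h2 p t hp.
have hJ : J p (start_state E p t, [::]) by split => //; apply: inv_cat.
have [[hI hob] hsub] := pres_timeslot hts hJ.
split => //.
- by move=> r m; rewrite hout => /hob.
- by move=> x hx; apply: hsub; rewrite /= mem_cat hx.
Qed.

Lemma mono_all (p : 'I_n) : correct E p -> forall t1 t2, t1 <= t2 ->
  {subset lS (st E p t1) <= lS (st E p t2)}.
Proof.
move=> hp t1; elim=> [|t2 IHt] h12.
  by move: h12; rewrite leqn0 => /eqP ->.
move: h12; rewrite leq_eqVlt => /orP[/eqP -> //|h12] x hx.
have [_ _ h3] := Q_all hp t2.+1; apply: h3 => /=; exact: IHt.
Qed.

Lemma vote_in (p : 'I_n) b : correct E p -> sends_vote E p b ->
  exists t, (p, PVote b) \in lS (st E p t).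
Proof.
move=> hp [r [t [m [hm hx]]]]; exists t.
have [_ hout _] := Q_all hp t; exact: hout _ _ hm _ hx.
Qed.

Lemma vote_pos (p : 'I_n) b : correct E p -> sends_vote E p b -> 0 < bview b.
Proof.
move=> hp /(vote_in hp) [t ht]; have [[_ h1 _] _ _] := Q_all hp t.
by have [] := h1 _ ht.
Qed.

Lemma vote_uniq (p : 'I_n) b1 b2 : correct E p -> sends_vote E p b1 ->
  sends_vote E p b2 -> bview b1 = bview b2 -> b1 = b2.
Proof.
move=> hp /(vote_in hp) [t1 ht1] /(vote_in hp) [t2 ht2] hv.
have [[_ _ h3] _ _] := Q_all hp (maxn t1 t2).
apply: h3 hv; [apply: (mono_all hp (leq_maxl t1 t2))|apply: (mono_all hp (leq_maxr t1 t2))] => //.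
Qed.

End Proof.

Theorem lemma2 (n f Delta : nat) (Tx Hash : eqType) (hnil : Hash)
    (H : block Tx Hash -> Hash) (E : execution n Tx Hash) :
  5 * f + 1 <= n ->
  minimmit_execution f Delta hnil H E ->
  forall b b' : block Tx Hash,
    receives_L f hnil E b ->
    b' <> b -> bview b' = bview b ->
    ~ receives_M f hnil E b'.
Proof.
move=> hn hex b b' hL hneq hv hM.
have hex' := hex; case: hex' => hf _ _ _ _.
have corr_in : forall A : {set 'I_n}, f < #|A| -> exists2 q, q \in A & correct E q.
  move=> A hA; case: (boolP [exists q in A, correct E q]) => [/exists_inP [q ? ?]|hno].
    by exists q.
  exfalso.
  have : A \subset [set p | ~~ correct E p].
    apply/subsetP => q qA; rewrite inE; apply/negP => cq; move/negP: hno; apply.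
    by apply/exists_inP; exists q.
  move/subset_leq_card => h; have := leq_trans h hf; by rewrite leqNgt hA.
case: hL => [hb|[A [hA hAv]]].
- case: hM => [hb'|[A' [hA' hA'v]]]; first by apply: hneq; rewrite hb hb'.
  have [q qA cq] := corr_in A' ltac:(lia).
  by have := vote_pos hex cq (hA'v q qA); rewrite hv hb.
- case: hM => [hb'|[A' [hA' hA'v]]].
  + have [q qA cq] := corr_in A ltac:(lia).
    by have := vote_pos hex cq (hAv q qA); rewrite -hv hb'.
  + have sub : A :&: A' \subset [set p | ~~ correct E p].
      apply/subsetP => q; rewrite inE => /andP[qA qA']; rewrite inE; apply/negP => cq.
      by apply: hneq; apply: (vote_uniq hex cq (hA'v q qA') (hAv q qA) hv).
    have hI : #|A :&: A'| <= f := leq_trans (subset_leq_card sub) hf.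
    have hUn : #|A :|: A'| <= n by have := max_card (A :|: A'); rewrite card_ord.
    have h1 : #|A| + #|A'| <= n + f.
      by rewrite -cardsUI; apply: leq_add.
    move: h1 hA hA'; lia.
Qed.
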